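(* Let $\Delta\ge 4$ be an integer and for positive integers $i,j$ define \[ F(i,j)=(4\Delta-6)\Bigl(\frac{1}{i}+\frac{1}{j}\Bigr)+\Delta^2-6\Delta+3+\frac{6}{\Delta}-(i-j)^2 . \] Then for every integer $i$ with $\left\lfloor \frac{\Delta+3}{2}\right\rfloor+1\le i\le \Delta-1$ we have the strict inequality \[ i\,F(i,2) > F(\Delta,\Delta). \] *)

(* Defs.v *)
From mathcomp Require Import all_boot all_order all_algebra.
Set Implicit Arguments. Unset Strict Implicit. Unset Printing Implicit Defensive.
Import Order.TTheory GRing.Theory Num.Theory.
Local Open Scope ring_scope.

Definition F (D i j : nat) : rat :=
  (4 * D%:R - 6) * ((i%:R)^-1 + (j%:R)^-1)
  + (D%:R) ^+ 2 - 6 * D%:R + 3 + 6 / D%:R - (i%:R - j%:R) ^+ 2.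

(* Main.v *)
Require Import Defs.
From mathcomp Require Import all_boot all_order all_algebra.
From mathcomp Require Import ring lra zify.
Import Order.TTheory GRing.Theory Num.Theory.
Local Open Scope ring_scope.

Theorem lemma4p2 (D i : nat) (hD : (4 <= D)%N)
  (hlo : ((D + 3)./2 + 1 <= i)%N) (hhi : (i <= D - 1)%N) :
  i%:R * F D i 2 > F D D D.
Proof.
have hh := odd_double_half (D + 3).
have h1 : (D + 4 <= 2 * i)%N.
  move: hh; rewrite -muln2 => hh; case: (odd (D+3)) hh => /= hh; lia.
have h2 : (i + 1 <= D)%N by lia.
have h3 : (6 <= D)%N by lia.
have r1 : D%:R + 4 <= 2 * i%:R :> rat.
  by have := h1; rewrite -(ler_nat rat) natrD natrM.
have r2 : i%:R + 1 <= D%:R :> rat.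
  by have := h2; rewrite -(ler_nat rat) natrD.
have r3 : 6 <= D%:R :> rat by rewrite (ler_nat rat 6).
rewrite /F.
set x := i%:R : rat. set d := D%:R : rat.
have dn : d != 0 by apply: lt0r_neq0; lra.
have xn : x != 0 by apply: lt0r_neq0; lra.
rewrite -subr_gt0.
set P := 2*d*(4*d-6) + d*(4*d-6)*x + 2*d*x*(d^2-6*d+3) + 12*x - 2*d*x*(x-2)^2
  - 16*d + 24 - 2*d^3 + 12*d^2 - 6*d - 12.
have -> : x * ((4 * d - 6) * (x^-1 + (2%:R)^-1) + d ^+ 2 - 6 * d + 3 + 6 / d - (x - 2%:R) ^+ 2) -
  ((4 * d - 6) * (d^-1 + d^-1) + d ^+ 2 - 6 * d + 3 + 6 / d - (d - d) ^+ 2) = P / (2 * d).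
  rewrite /P; field; apply/andP; split => //.
apply: divr_gt0; last lra.
rewrite /P.
have a : 0 <= 2*x - d - 4 by lra.
have b : 0 <= d - 1 - x by lra.
have c : 0 <= d * ((2*x - d - 4) * (d - 1 - x)) * (2*x + 3*d - 6).
  apply: mulr_ge0; last lra; apply: mulr_ge0; [lra| exact: mulr_ge0].
have e1 : 0 <= (d - 1 - x) * (3 * d^3 - 2 * d^2 + 12 * d - 24).
  apply: mulr_ge0; first lra. nra.
have e2 : 0 < d * ((d - 2) * (d + 1)).
  apply: mulr_gt0; first lra. apply: mulr_gt0; lra.
nra.
Qed.
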